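(* Let $G=(V,E)$ be a graph with a partition $(V_1,V_2)$ of $V$ such that $G[V_1]$ and $G[V_2]$ are $P_5$-free. Let $C$ be a connected component of $G[V_2]$ and let $X=V(C)\cap N(V_1)$, where $N(V_1)$ is the set of vertices having a neighbour in $V_1$. Let $F\subseteq V_2$ be a set such that $G\setminus F$ is $P_5$-free and $|F\cap V(C)|\ge|X|$. Then $F'=(F\setminus V(C))\cup X$ satisfies that $G\setminus F'$ is $P_5$-free, and $|F'|\le|F|$.
   Context: Graphs are finite, simple and undirected. A $P_5$ is a path on $5$ vertices (as a not necessarily induced subgraph); a graph is $P_5$-free if it contains no $P_5$. $G[X]$ denotes the subgraph induced by $X$, and $G\setminus F=G[V\setminus F]$. *)

(* Defs.v *)
From mathcomp Require Import all_boot.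
Set Implicit Arguments. Unset Strict Implicit. Unset Printing Implicit Defensive.

Definition simple_graph (T : finType) (e : rel T) :=
  symmetric e /\ irreflexive e.

(* G[S] contains a P5 (not necessarily induced): five pairwise distinct
   vertices of S, v0 - v1 - v2 - v3 - v4 consecutive adjacent. *)
Definition has_P5_in (T : finType) (e : rel T) (S : {set T}) : Prop :=
  exists v : 'I_5 -> T,
    injective v /\ (forall i, v i \in S) /\
    (forall i : 'I_5, forall j : 'I_5, j = i.+1 :> nat -> e (v i) (v j)).

Definition P5_free_in (T : finType) (e : rel T) (S : {set T}) : Prop :=
  ~ has_P5_in e S.

Definition induced_rel (T : finType) (e : rel T) (S : {set T}) : rel T :=
  fun x y => [&& x \in S, y \in S & e x y].

Definition is_component (T : finType) (e : rel T) (S C : {set T}) : Prop :=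
  exists2 x, x \in S &
    C = [set y in S | connect (induced_rel e S) x y].

Definition nbhd (T : finType) (e : rel T) (A : {set T}) : {set T} :=
  [set v | [exists u in A, e v u]].

(* Main.v *)
Require Import Defs.
From mathcomp Require Import all_boot.

Theorem lemma12 (T : finType) (e : rel T) (V1 V2 C F : {set T}) :
  simple_graph e ->
  V1 :&: V2 = set0 -> V1 :|: V2 = [set: T] ->
  P5_free_in e V1 -> P5_free_in e V2 ->
  is_component e V2 C ->
  F \subset V2 ->
  P5_free_in e (~: F) ->
  #|C :&: nbhd e V1| <= #|F :&: C| ->
  let X := C :&: nbhd e V1 in
  let F' := (F :\: C) :|: X in
  P5_free_in e (~: F') /\ #|F'| <= #|F|.
Proof.
move=> [esym eirr] V12 V12T _ P2 [x0 x0V2 defC] FV2 PF hcard X F'.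
split; last first.
  rewrite /F' /X -(cardsID C F) addnC.
  apply: leq_trans (leq_card_setU _ _) _.
  by rewrite leq_add2l.
have CV2 : C \subset V2 by rewrite defC; apply/subsetP=> y; rewrite inE => /andP[].
have clos : forall y z, y \in C -> y \notin X -> e y z -> z \in C.
  move=> y z yC yX eyz.
  have zV2 : z \in V2.
    have : z \in V1 :|: V2 by rewrite V12T inE.
    rewrite inE => /orP[zV1|//].
    case/negP: yX; rewrite /X inE yC /nbhd inE /=.
    by apply/existsP; exists z; rewrite zV1.
  move: yC; rewrite defC !inE => /andP[yV2 cy]; rewrite zV2 /=.
  apply: connect_trans cy _; apply: connect1.
  by rewrite /induced_rel yV2 zV2.
move=> [v [vinj [vS vE]]].
have vF' : forall i, v i \notin F'.
  by move=> i; have := vS i; rewrite inE.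
have step : forall i j : 'I_5, j = i.+1 :> nat ->
    (v i \in C) = (v j \in C).
  move=> i j hij; apply/idP/idP => h.
  - apply: (clos (v i)) => //; last exact: vE.
    by apply: contra (vF' i); move=> hx; rewrite /F' inE hx orbT.
  - apply: (clos (v j)) => //; last by rewrite esym; apply: vE.
    by apply: contra (vF' j); move=> hx; rewrite /F' inE hx orbT.
pose b k := v (inord k) \in C.
have bS : forall k, k < 4 -> b k = b k.+1.
  move=> k hk; apply: step.
  by rewrite !inordK //; apply: (leq_trans hk).
have b0 : forall k, k < 5 -> b k = b 0.
  elim=> [//|k IH] hk.
  by rewrite -bS // IH // ltnW.
have ball : forall i : 'I_5, (v i \in C) = b 0.
  by move=> i; rewrite -(b0 i) // /b inord_val.
case hb : (b 0).
  apply: P2; exists v; split=> //; split=> // i.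
  by apply: (subsetP CV2); rewrite ball.
apply: PF; exists v; split=> //; split=> // i.
have := vF' i; rewrite /F' !inE negb_or => /andP[h _].
by move: h; rewrite ball hb /=.
Qed.
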